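(* For any direct signaling scheme $\pi$, the expected regret incurred by the procedure CheckPersu$(\pi)$ is at most $$\frac{U(\pi^* )}{\sum_{i\in[m]}\lambda(i)\pi(i)}-\mathbf{1}[\pi\text{ is persuasive}].$$
   Context: Model: state space $[m]$, common prior $\lambda\in\Delta([m])$, user actions $\{0,1\}$, user utility $\rho$; $\omega(i)=(\rho(i,1)-\rho(i,0))\lambda(i)$, with standing assumptions that some $\omega(i)>0$ and $\sum_i\omega(i)<0$. In each round the platform commits to a signaling scheme, a state $\theta_t\sim\lambda$ (independent across rounds) and a signal are drawn, the user forms the Bayesian posterior and takes action 1 iff its posterior expected utility is at least that of action 0, and the platform gets utility equal to the action. $U(\pi)$ is the platform's expected one-round utility under $\pi$. A direct signaling scheme has signals $\{0,1\}$, sending signal 1 in state $i$ w.p. $\pi(i)$; it is persuasive if the user takes action 1 whenever signal 1 is realized. $\pi^*$ is an optimal solution of $\max_{\pi\in[0,1]^m}\sum_i\lambda(i)\pi(i)$ s.t. $\sum_i\omega(i)\pi(i)\ge0$ (the optimal scheme in hindsight). Procedure CheckPersu$(\pi)$: in each successive round commit to $\pi$; if $\sigma_t=1,a_t=1$ return True; if $\sigma_t=1,a_t=0$ return False; if $\sigma_t=0,a_t=1$ return False; else continue to the next round. The regret incurred by the procedure is the expected sum, over the rounds it uses, of $U(\pi^* )-U(\pi)$. *)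

(* Defs.v *)
From HB Require Import structures.
From mathcomp Require Import all_boot all_order all_algebra.
From mathcomp Require Import all_classical all_reals all_analysis.
Set Implicit Arguments. Unset Strict Implicit. Unset Printing Implicit Defensive.
Import Order.TTheory GRing.Theory Num.Theory.
Local Open Scope ring_scope.

(* Conventions: states are 'I_m; user actions {0,1} are encoded as bool
   (false = 0, true = 1); signals of a direct scheme are bool
   (false = signal 0, true = signal 1).  A direct scheme is a vector
   pi : 'I_m -> R, sending signal 1 in state i with probability pi i. *)

Section Model.
Variables (R : realType) (m : nat).
Variables (lam : 'I_m -> R) (rho : 'I_m -> bool -> R).

Definition is_prior : Prop := (forall i, 0 <= lam i) /\ \sum_i lam i = 1.

Definition omega (i : 'I_m) : R := (rho i true - rho i false) * lam i.

Definition standing_assumptions : Prop :=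
  (exists i, 0 < omega i) /\ \sum_i omega i < 0.

Definition direct_scheme (pi : 'I_m -> R) : Prop :=
  forall i, 0 <= pi i <= 1.

Definition sigp (pi : 'I_m -> R) (i : 'I_m) (s : bool) : R :=
  if s then pi i else 1 - pi i.

Definition Psig (pi : 'I_m -> R) (s : bool) : R :=
  \sum_i lam i * sigp pi i s.

Definition posterior (pi : 'I_m -> R) (s : bool) (i : 'I_m) : R :=
  lam i * sigp pi i s / Psig pi s.

Definition post_util (pi : 'I_m -> R) (s : bool) (a : bool) : R :=
  \sum_i posterior pi s i * rho i a.

Definition action (pi : 'I_m -> R) (s : bool) : bool :=
  post_util pi s false <= post_util pi s true.

(* platform's expected one-round utility (= probability of action 1) *)
Definition U (pi : 'I_m -> R) : R :=
  \sum_(s : bool) Psig pi s * (action pi s)%:R.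

Definition persuasive (pi : 'I_m -> R) : bool :=
  (Psig pi true > 0) ==> action pi true.

Definition LP_feasible (p : 'I_m -> R) : Prop :=
  direct_scheme p /\ 0 <= \sum_i omega i * p i.
Definition LP_optimal (ps : 'I_m -> R) : Prop :=
  LP_feasible ps /\
  forall p, LP_feasible p -> \sum_i lam i * p i <= \sum_i lam i * ps i.

(* ---- the procedure CheckPersu(pi) ----
   Each round: theta ~ lam (iid), signal sigma ~ sigp pi theta, the user plays
   a = action pi sigma.  The procedure continues to the next round exactly when
   sigma = 0 and a = 0; otherwise it returns (True iff sigma = 1, a = 1). *)

Definition round_continues (pi : 'I_m -> R) (o : 'I_m * bool) : bool :=
  ~~ o.2 && ~~ action pi o.2.

Definition round_prob (pi : 'I_m -> R) (o : 'I_m * bool) : R :=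
  lam o.1 * sigp pi o.1 o.2.

(* probability that the procedure uses round n+1, i.e. that the first n
   rounds (history h of states and signals) all continued *)
Definition P_round_used (pi : 'I_m -> R) (n : nat) : R :=
  \sum_(h : {ffun 'I_n -> 'I_m * bool})
     (\prod_(k < n) round_prob pi (h k)) *
     ([forall k, round_continues pi (h k)])%:R.

Definition checkpersu_regret (pi ps : 'I_m -> R) : \bar R :=
  (\sum_(0 <= n <oo) ((P_round_used pi n * (U ps - U pi))%:E))%E.

End Model.

(* Main.v *)
Require Import Defs.
From HB Require Import structures.
From mathcomp Require Import all_boot all_order all_algebra.
From mathcomp Require Import all_classical all_reals all_analysis.
From mathcomp Require Import ring lra.
Import Order.TTheory GRing.Theory Num.Theory.
Local Open Scope ring_scope.

Lemma P_round_used_eq (R : realType) (m : nat)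
    (lam : 'I_m -> R) (rho : 'I_m -> bool -> R) (pi : 'I_m -> R) n :
  P_round_used lam rho pi n =
  (\sum_(o : 'I_m * bool) round_prob lam pi o * (round_continues lam rho pi o)%:R) ^+ n.
Proof.
rewrite /P_round_used.
transitivity (\sum_(h : {ffun 'I_n -> 'I_m * bool})
   \prod_(k < n) (round_prob lam pi (h k) * (round_continues lam rho pi (h k))%:R)).
  apply: eq_bigr => h _; rewrite [RHS]big_split /=; congr (_ * _).
  case: forallP => [H|H].
    by rewrite big1 // => k _; rewrite H.
  have [k Hk] : exists k, ~~ round_continues lam rho pi (h k).
    apply/existsP; rewrite -negb_forall; apply/negP => /forallP; exact: H.
  by rewrite (bigD1 k) //= (negbTE Hk) mul0r.
rewrite -[in RHS](card_ord n) -prodr_const bigA_distr_bigA; exact: eq_bigr.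
Qed.

Lemma q_eq (R : realType) (m : nat)
    (lam : 'I_m -> R) (rho : 'I_m -> bool -> R) (pi : 'I_m -> R) :
  \sum_(o : 'I_m * bool) round_prob lam pi o * (round_continues lam rho pi o)%:R
  = Psig lam pi false * (~~ action lam rho pi false)%:R.
Proof.
transitivity (\sum_i \sum_s round_prob lam pi (i, s) *
            (round_continues lam rho pi (i, s))%:R).
  by rewrite pair_bigA; apply: eq_bigr => -[i s].
rewrite /Psig mulr_suml; apply: eq_bigr => i _.
by rewrite big_bool /round_continues /round_prob /= mulr0 add0r.
Qed.

Theorem mainTheorem5 (R : realType) (m : nat)
    (lam : 'I_m -> R) (rho : 'I_m -> bool -> R)
    (pi ps : 'I_m -> R) :
  is_prior lam ->
  standing_assumptions lam rho ->
  LP_optimal lam rho ps ->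
  direct_scheme pi ->
  0 < \sum_i lam i * pi i ->
  (checkpersu_regret lam rho pi ps <=
   (U lam rho ps / (\sum_i lam i * pi i)
    - (persuasive lam rho pi)%:R)%:E)%E.
Proof.
move=> [lam0 lam1] _ [[psd _] _] pid P1pos.
set P1 := \sum_i lam i * pi i in P1pos *.
have HP1 : Psig lam pi true = P1 by [].
have HP0 : Psig lam pi false = 1 - P1.
  rewrite /Psig /sigp /=.
  under eq_bigr do rewrite mulrBr mulr1.
  by rewrite sumrB lam1.
have P0ge : 0 <= 1 - P1.
  rewrite -HP0 /Psig sumr_ge0 // => i _; rewrite mulr_ge0 // /sigp /=.
  by case/andP: (pid i) => _ ?; rewrite subr_ge0.
have Ups0 : 0 <= U lam rho ps.
  rewrite /U sumr_ge0 // => s _; rewrite mulr_ge0 // /Psig sumr_ge0 // => i _.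
  case/andP: (psd i) => ? ?; rewrite mulr_ge0 // /sigp; case: s => //.
  by rewrite subr_ge0.
have Hpers : persuasive lam rho pi = action lam rho pi true.
  by rewrite /persuasive HP1 P1pos.
have HUpi : U lam rho pi = P1 * (action lam rho pi true)%:R
                          + (1 - P1) * (action lam rho pi false)%:R.
  by rewrite /U big_bool /= HP1 HP0.
set q := (1 - P1) * (~~ action lam rho pi false)%:R.
set c := U lam rho ps - U lam rho pi.
have Hq : `|q| < 1.
  rewrite /q; case: (action _ _ _ false) => /=; first by rewrite mulr0 normr0.
  by rewrite mulr1 ger0_norm // ltrBlDr ltrDl.
have -> : checkpersu_regret lam rho pi ps = (c / (1 - q))%:E.
  rewrite /checkpersu_regret.
  have -> : (fun n => \sum_(0 <= k < n) (P_round_used lam rho pi k * c)%:E)%E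
      = EFin \o series (geometric c q).
    apply/funext => n /=; rewrite sumEFin /series /=; congr (_%:E).
    by apply: eq_bigr => k _; rewrite P_round_used_eq q_eq HP0 mulrC.
  rewrite EFin_lim; last exact: is_cvg_geometric_series.
  congr (_%:E). have /(@cvg_unique _ (@Rhausdorff R)) := @cvg_geometric_series _ c _ Hq. by move/(_ _ (@is_cvg_geometric_series _ c _ Hq)) => ->.
rewrite lee_fin Hpers /c HUpi /q.
set x := U lam rho ps / P1.
have Hx : U lam rho ps = x * P1 by rewrite /x divfK // gt_eqF.
have x0 : 0 <= x by rewrite /x divr_ge0 // ltW.
rewrite Hx.
case: (action _ _ _ false); case: (action _ _ _ true) => /=.
- rewrite !(mulr0, mulr1, subr0, divr1); nra.
- rewrite !(mulr0, mulr1, subr0, divr1); nra.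
- have -> : 1 - (1 - P1) * 1 = P1 by ring.
  rewrite ler_pdivrMr //; nra.
- have -> : 1 - (1 - P1) * 1 = P1 by ring.
  rewrite ler_pdivrMr //; nra.
Qed.
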